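(* Let $T$ be a rooted tree whose leaves are the keys $[n]$, for each node $v$ let $R_v$ be the set of leaves below $v$, let $p\in[0,1]^n$ with $\sum_ip_i$ an integer, and let $S$ be the random output of the hierarchy summarization procedure applied to $T$ and $p$. Let $Q=R_1\cup\dots\cup R_\ell$ be a union of $\ell$ pairwise disjoint ranges $R_h=R_{v_h}$. Then, with $p(R)=\sum_{i\in R}p_i$, the discrepancy satisfies $\big||S\cap Q|-p(Q)\big|\le\ell$, and it is distributed as the error of a VarOpt sample on a subset of expected size $\mu=\sum_{h=1}^\ell\big(p(R_h)-\lfloor p(R_h)\rfloor\big)\le\ell$: namely, the random variables $Y_h=|S\cap R_h|-\lfloor p(R_h)\rfloor$ take values in $\{0,1\}$, satisfy $\mathbb{E}[Y_h]=p(R_h)-\lfloor p(R_h)\rfloor$, satisfy for every $J\subseteq\{1,\dots,\ell\}$ the bounds $\mathbb{E}[\prod_{h\in J}Y_h]\le\prod_{h\in J}\mathbb{E}[Y_h]$ and $\mathbb{E}[\prod_{h\in J}(1-Y_h)]\le\prod_{h\in J}(1-\mathbb{E}[Y_h])$, and $|S\cap Q|-p(Q)=\sum_{h=1}^\ell Y_h-\mu$.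
   Context: Pair-Aggregate$(p,i,j)$, for indices $i\ne j$ with $0<p_i,p_j<1$, modifies only entries $i,j$ of the current vector $p$: if $p_i+p_j<1$, then with probability $p_i/(p_i+p_j)$ set $(p_i,p_j)\leftarrow(p_i+p_j,0)$ and otherwise $(p_i,p_j)\leftarrow(0,p_i+p_j)$; if $p_i+p_j\ge1$, then with probability $(1-p_j)/(2-p_i-p_j)$ set $(p_i,p_j)\leftarrow(1,p_i+p_j-1)$ and otherwise $(p_i,p_j)\leftarrow(p_i+p_j-1,1)$ (fresh independent randomness each call). The hierarchy summarization procedure: starting from $p$, while at least two indices have current value in $(0,1)$, choose a pair $i\ne j$ of such indices such that no other pair of indices with current values in $(0,1)$ has a lowest common ancestor in $T$ that is a proper descendant of $\mathrm{LCA}(i,j)$ (ties arbitrary), and apply Pair-Aggregate to it; at termination output $S=\{i:p_i=1\}$. A VarOpt sample is a random subset with inclusion probabilities given, fixed size, and the inclusion/exclusion product bounds $\Pr[J\subseteq S]\le\prod_{i\in J}p_i$, $\Pr[J\cap S=\emptyset]\le\prod_{i\in J}(1-p_i)$. *)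

(* Defs.v *)
From HB Require Import structures.
From mathcomp Require Import all_boot all_order all_algebra.
Set Implicit Arguments. Unset Strict Implicit. Unset Printing Implicit Defensive.
Import Order.TTheory GRing.Theory Num.Theory.
Local Open Scope ring_scope.

Section HS.
Variables (R : archiRealFieldType) (n : nat).

Definition vec := {ffun 'I_n -> R}.

Definition fracb (x : R) : bool := (0 < x) && (x < 1).

Definition nfrac (q : vec) : nat := #|[set i | fracb (q i)]|.

Definition upd2 (q : vec) (i j : 'I_n) (a b : R) : vec :=
  [ffun k => if k == i then a else if k == j then b else q k].

(* Pair-Aggregate(q,i,j) as a finite distribution: list of (probability, outcome) *)
Definition pair_aggregate (q : vec) (i j : 'I_n) : seq (R * vec) :=
  let pi := q i in let pj := q j in
  if pi + pj < 1 then
    [:: (pi / (pi + pj), upd2 q i j (pi + pj) 0);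
        (1 - pi / (pi + pj), upd2 q i j 0 (pi + pj))]
  else
    [:: ((1 - pj) / (2 - pi - pj), upd2 q i j 1 (pi + pj - 1));
        (1 - (1 - pj) / (2 - pi - pj), upd2 q i j (pi + pj - 1) 1)].

(* Laminar-family representation of a rooted tree with leaf set [n]:
   F is the set of ranges R_v (leaves below v) of the nodes v. *)
Definition tree_family (F : {set {set 'I_n}}) : Prop :=
  [/\ [set: 'I_n] \in F, set0 \notin F, (forall i, [set i] \in F) &
      (forall A B, A \in F -> B \in F ->
         [|| A \subset B, B \subset A | [disjoint A & B]])].

(* leaf set of LCA(i,j): the smallest range containing both i and j *)
Definition lca_range (F : {set {set 'I_n}}) (i j : 'I_n) : {set 'I_n} :=
  \bigcap_(A in F | (i \in A) && (j \in A)) A.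

Definition valid_pair (F : {set {set 'I_n}}) (q : vec) (ij : 'I_n * 'I_n) : Prop :=
  [/\ ij.1 != ij.2, fracb (q ij.1), fracb (q ij.2) &
      forall i' j', i' != j' -> fracb (q i') -> fracb (q j') ->
        ~ (lca_range F i' j' \proper lca_range F ij.1 ij.2)].

(* a tie-breaking rule: a (state-dependent) choice of an admissible pair *)
Definition valid_chooser (F : {set {set 'I_n}}) (choose : vec -> 'I_n * 'I_n) : Prop :=
  forall q, (2 <= nfrac q)%N -> valid_pair F q (choose q).

Fixpoint run (choose : vec -> 'I_n * 'I_n) (k : nat) (q : vec) : seq (R * vec) :=
  match k with
  | O => [:: (1, q)]
  | k'.+1 =>
      if (2 <= nfrac q)%N then
        flatten [seq [seq (w.1 * v.1, v.2) | v <- run choose k' w.2]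
                | w <- pair_aggregate q (choose q).1 (choose q).2]
      else [:: (1, q)]
  end.

(* output distribution of the hierarchy summarization procedure;
   the loop terminates after fewer than n iterations *)
Definition hsumm (choose : vec -> 'I_n * 'I_n) (p : vec) : seq (R * vec) :=
  run choose n p.

Definition out_set (q : vec) : {set 'I_n} := [set i | q i == 1].

Definition expect (D : seq (R * vec)) (f : vec -> R) : R :=
  \sum_(x <- D) x.1 * f x.2.

Definition pmass (p : vec) (A : {set 'I_n}) : R := \sum_(i in A) p i.

End HS.

(* Main.v *)
Require Import Defs.
From HB Require Import structures.
From mathcomp Require Import all_boot all_order all_algebra.
From mathcomp Require Import ring lra.
From mathcomp Require Import zify.
Import Order.TTheory GRing.Theory Num.Theory.
Set Implicit Arguments. Unset Strict Implicit. Unset Printing Implicit Defensive.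
Local Open Scope ring_scope.
Section X.
Variable R : archiRealFieldType.
Lemma natrz (m : nat) : m%:R = (m%:Z)%:~R :> R. Proof. by []. Qed.
Lemma int_mid (z : int) : 0 < z%:~R :> R -> z%:~R < 1 :> R -> False.
Proof. rewrite ltr0z => h1 h2. rewrite ltrz1 in h2. by case: z h1 h2 => [[|m]|m]. Qed.
Lemma nat_eq_int (m : nat) (z : int) :
  z%:~R - 1 < m%:R :> R -> m%:R < z%:~R + 1 :> R -> m%:R = z%:~R :> R.
Proof.
rewrite natrz -[1 : R]/(1%:~R) -intrB -intrD !ltr_int => h1 h2.
have -> : m%:Z = z by lia. by [].
Qed.
Lemma nat_01 (m : nat) (z : int) :
  z%:~R <= m%:R :> R -> m%:R <= z%:~R + 1 :> R ->
  m%:R - z%:~R = 0 :> R \/ m%:R - z%:~R = 1 :> R.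
Proof.
rewrite natrz -[1 : R]/(1%:~R) -intrD !ler_int -intrB => h1 h2.
have [->|->] : (m%:Z - z = 0 \/ m%:Z - z = 1)%R by lia.
by left. by right.
Qed.
Lemma sum_noint (m K : nat) (x : R) : m%:R + x = K%:R -> 0 < x -> x < 1 -> False.
Proof.
move=> h; have -> : x = (K%:Z - m%:Z)%:~R by rewrite intrB -!natrz -h; ring.
exact: int_mid.
Qed.
Lemma prod_le1 (I : finType) (P : {set I}) (c : I -> R) (d : R) :
  (forall h h', h \in P -> h' \in P -> h = h') ->
  \prod_(h in P) (c h + d) = \prod_(h in P) c h + #|P|%:R * d.
Proof.
move=> U; case: (set_0Vmem P) => [->|[x Hx]].
  by rewrite !big_set0 cards0 mul0r addr0.
have -> : P = [set x].
  by apply/setP => y; rewrite inE; apply/idP/eqP => [Hy|->//]; exact: U.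
by rewrite !big_set1 cards1 mul1r.
Qed.

Lemma key (I : finType) (J : {set I}) (c s : I -> R) (w d1 d2 : R) :
  0 <= w <= 1 -> w * d1 + (1 - w) * d2 = 0 ->
  (forall h, h \in J -> 0 <= c h) ->
  (forall h, h \in J -> [|| s h == 0, s h == 1 | s h == -1]) ->
  (forall h h', h \in J -> h' \in J -> s h = 1 -> s h' = 1 -> h = h') ->
  (forall h h', h \in J -> h' \in J -> s h = -1 -> s h' = -1 -> h = h') ->
  w * \prod_(h in J) (c h + s h * d1) + (1 - w) * \prod_(h in J) (c h + s h * d2)
    <= \prod_(h in J) c h.
Proof.
move=> /andP[w0 w1] Hm Hc Hs U1 U2.
set P := [set h in J | s h == 1]; set N := [set h in J | s h == -1].
set Z := [set h in J | s h == 0].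
have m11 : (-1 : R) < 1 by lra.
have m01 : (-1 : R) < 0 by lra.
have p01 : (0 : R) < 1 by lra.
have split : forall f : I -> R,
    \prod_(h in J) f h = \prod_(h in P) f h * \prod_(h in N) f h * \prod_(h in Z) f h.
  move=> f; rewrite (bigID (fun h => s h == 1)) /= [X in _ * X](bigID (fun h => s h == -1)) /=.
  rewrite mulrA; congr (_ * _ * _); apply: eq_bigl => h; rewrite !inE.
  - by [].
  - case hJ: (h \in J) => //=; case/or3P: (Hs h hJ) => /eqP ->;
      by rewrite ?eqxx ?(lt_eqF m11) ?(gt_eqF m11) ?(lt_eqF m01) ?(gt_eqF m01)
                 ?(lt_eqF p01) ?(gt_eqF p01).
  - case hJ: (h \in J) => //=; case/or3P: (Hs h hJ) => /eqP ->;
      by rewrite ?eqxx ?(lt_eqF m11) ?(gt_eqF m11) ?(lt_eqF m01) ?(gt_eqF m01)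
                 ?(lt_eqF p01) ?(gt_eqF p01).
have UP : forall h h', h \in P -> h' \in P -> h = h'.
  move=> h h'; rewrite !inE => /andP[h1 /eqP h2] /andP[h3 /eqP h4]; exact: U1.
have UN : forall h h', h \in N -> h' \in N -> h = h'.
  move=> h h'; rewrite !inE => /andP[h1 /eqP h2] /andP[h3 /eqP h4]; exact: U2.
have Ef : forall d, \prod_(h in J) (c h + s h * d) =
   (\prod_(h in P) c h + #|P|%:R * d) * (\prod_(h in N) c h + #|N|%:R * - d)
   * \prod_(h in Z) c h.
  move=> d; rewrite split -prod_le1 // -prod_le1 //; congr (_ * _ * _).
  - by apply: eq_bigr => h; rewrite inE => /andP[_ /eqP ->]; rewrite mul1r.
  - by apply: eq_bigr => h; rewrite inE => /andP[_ /eqP ->]; rewrite mulN1r.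
  - by apply: eq_bigr => h; rewrite inE => /andP[_ /eqP ->]; rewrite mul0r addr0.
rewrite !Ef split.
have C0 : 0 <= \prod_(h in Z) c h.
  by apply: prodr_ge0 => h; rewrite inE => /andP[hJ _]; exact: Hc.
set xP := \prod_(h in P) c h; set xN := \prod_(h in N) c h.
set C := \prod_(h in Z) c h; set a := #|P|%:R; set b := #|N|%:R.
have a0 : 0 <= a by rewrite ler0n.
have b0 : 0 <= b by rewrite ler0n.
have -> : w * ((xP + a * d1) * (xN + b * - d1) * C) +
    (1 - w) * ((xP + a * d2) * (xN + b * - d2) * C) =
    xP * xN * C + - (C * a * b * (w * d1 ^+ 2 + (1 - w) * d2 ^+ 2)) +
    C * (a * xN - b * xP) * (w * d1 + (1 - w) * d2) by ring.
rewrite Hm mulr0 addr0 gerDl oppr_le0.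
apply: mulr_ge0; first by do 2 apply: mulr_ge0 => //.
apply: addr_ge0; apply: mulr_ge0; rewrite ?sqr_ge0 ?subr_ge0 //.
Qed.
End X.
Section Tree.
Variables (R : archiRealFieldType) (n : nat) (F : {set {set 'I_n}}).
Hypothesis HF : tree_family F.

Lemma lca_sub A i k : A \in F -> i \in A -> k \in A -> lca_range F i k \subset A.
Proof. by move=> HA hi hk; rewrite /lca_range; apply: bigcap_inf; rewrite HA hi hk. Qed.

Lemma lca_mem i j : (i \in lca_range F i j) && (j \in lca_range F i j).
Proof.
by apply/andP; split; apply/bigcapP => B /andP[_ /andP[]].
Qed.

Lemma lca_proper A i j : A \in F -> (i \in A) != (j \in A) -> A \proper lca_range F i j.
Proof.
move=> HA hij; case: HF => _ _ _ Hlam.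
have sub : A \subset lca_range F i j.
  apply/subsetP => x hx; apply/bigcapP => B /andP[HB /andP[hiB hjB]].
  case/or3P: (Hlam A B HA HB) => [/subsetP/(_ x hx)//|/subsetP hBA|hdis].
  - by move: hij; rewrite (hBA i hiB) (hBA j hjB).
  - move: hij; case hi: (i \in A); case hj: (j \in A) => //= _.
    + by rewrite (disjointFr hdis hi) in hiB.
    + by rewrite (disjointFr hdis hj) in hjB.
apply/properP; split=> //.
have /andP[hi hj] := lca_mem i j.
move: hij; case: (i \in A) / idP => hiA; case: (j \in A) / idP => hjA //= _.
  by exists j => //; apply/negP.
by exists i => //; apply/negP.
Qed.

Lemma crossing (q : vec R n) i j A : valid_pair F q (i, j) -> A \in F ->
  (2 <= #|[set k in A | fracb (q k)]|)%N -> (i \in A) = (j \in A).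
Proof.
case=> /= hij fi fj Hv HA H2; apply/eqP; apply: contraT => hne.
have [x [hxA fx Hp]] : exists x, [/\ x \in A, fracb (q x) & A \proper lca_range F i j].
  move: (hne); case hi: (i \in A); case hj: (j \in A) => //= _.
    by exists i; split => //; apply: lca_proper; rewrite ?hi ?hj.
  by exists j; split => //; apply: lca_proper; rewrite ?hi ?hj.
rewrite (cardsD1 x) in H2.
have : (0 < #|[set k in A | fracb (q k)] :\ x|)%N.
  by move: H2; case: (x \in [set k in A | fracb (q k)]) => // H2; apply: leq_trans H2.
rewrite card_gt0 => /set0Pn [k]; rewrite !inE => /andP[hkx /andP[hkA fk]].
case: (Hv x k _ fx fk); first by rewrite eq_sym.
exact: sub_proper_trans (lca_sub HA hxA hkA) Hp.
Qed.
End Tree.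
Section Upd.
Variables (R : archiRealFieldType) (n : nat).
Implicit Types (q : vec R n) (A : {set 'I_n}).

Lemma upd2E q i j a b k : upd2 q i j a b k = if k == i then a else if k == j then b else q k.
Proof. by rewrite ffunE. Qed.

Lemma sum_delta A i (c : R) : \sum_(k in A) (k == i)%:R * c = (i \in A)%:R * c.
Proof.
case hi: (i \in A).
  rewrite (bigD1 i) //= eqxx big1 ?addr0 // => k /andP[_ /negbTE ->]; by rewrite mul0r.
rewrite big1 ?mul0r // => k hk.
have /negbTE -> : k != i by apply: contraTneq hk => ->; rewrite hi.
by rewrite mul0r.
Qed.

Lemma pmass_upd2 q i j a b A : i != j ->
  pmass (upd2 q i j a b) A = pmass q A + (i \in A)%:R * (a - q i) + (j \in A)%:R * (b - q j).
Proof.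
move=> hij; rewrite /pmass -!sum_delta -!big_split /=; apply: eq_bigr => k _.
rewrite upd2E; case: (k =P i) => [->|/eqP hki]; first by rewrite (negbTE hij) /=; ring.
case: (k =P j) => [->|/eqP hkj] /=; ring.
Qed.

Lemma fracset_sub q i j a b A : fracb (q i) -> fracb (q j) ->
  [set k in A | fracb (upd2 q i j a b k)] \subset [set k in A | fracb (q k)].
Proof.
move=> fi fj; apply/subsetP => k; rewrite !inE upd2E => /andP[-> /=].
by case: (k =P i) => [->|_] //; case: (k =P j) => [->|_].
Qed.

Lemma nfrac_dec q i j a b : i != j -> fracb (q i) -> fracb (q j) -> ~~ (fracb a && fracb b) ->
  (nfrac (upd2 q i j a b) < nfrac q)%N.
Proof.
move=> hij fi fj hab; rewrite /nfrac; apply: proper_card; apply/properP; split.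
  apply/subsetP => k; rewrite !inE upd2E.
  by case: (k =P i) => [->|_] //; case: (k =P j) => [->|_].
move: hab; rewrite negb_and; case/orP => ha.
  by exists i; rewrite !inE ?upd2E ?eqxx.
by exists j; rewrite !inE ?upd2E ?eqxx // eq_sym (negbTE hij).
Qed.

Lemma PA_spec q i j : fracb (q i) -> fracb (q j) ->
  exists w a1 b1 a2 b2, pair_aggregate q i j =
     [:: (w, upd2 q i j a1 b1); (1 - w, upd2 q i j a2 b2)] /\
  [/\ 0 <= w <= 1, a1 + b1 = q i + q j, a2 + b2 = q i + q j,
      w * a1 + (1 - w) * a2 = q i &
      [/\ (0 <= a1 <= 1) && (0 <= b1 <= 1), (0 <= a2 <= 1) && (0 <= b2 <= 1),
          ~~ (fracb a1 && fracb b1) & ~~ (fracb a2 && fracb b2)]].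
Proof.
rewrite /fracb => /andP[i0 i1] /andP[j0 j1]; rewrite /pair_aggregate.
case: ifP => hs.
  set s := q i + q j.
  have s0 : 0 < s by rewrite /s; lra.
  have hw : q i / s * s = q i by rewrite divfK // gt_eqF.
  have w0 : 0 <= q i / s by rewrite divr_ge0 // ltW.
  have w1 : q i / s <= 1 by rewrite ler_pdivrMr // mul1r /s; lra.
  exists (q i / s), s, 0, 0, s; split => //; split => //.
  - by rewrite w0 w1.
  - by rewrite addr0.
  - by rewrite add0r.
  - by rewrite mulr0 addr0.
  - split; rewrite ?lexx ?ltxx ?andbF ?(ltW s0) ?(ltW hs) ?ler01 //=.
set t := q i + q j.
have s1 : 1 <= t by rewrite /t leNgt hs.
have t0 : 0 < 2 - q i - q j by lra.
have hw : (1 - q j) / (2 - q i - q j) * (2 - q i - q j) = 1 - q j by rewrite divfK // gt_eqF.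
have w0 : 0 <= (1 - q j) / (2 - q i - q j) by rewrite divr_ge0 // ?ltW //; lra.
have w1 : (1 - q j) / (2 - q i - q j) <= 1 by rewrite ler_pdivrMr // mul1r; lra.
exists ((1 - q j) / (2 - q i - q j)), 1, (t - 1), (t - 1), 1; split => //; split => //.
- by rewrite w0 w1.
- by rewrite /t; ring.
- by rewrite /t; ring.
- set w := (1 - q j) / (2 - q i - q j) in hw *.
  have -> : w * 1 + (1 - w) * (t - 1) = w * (2 - q i - q j) + (t - 1) by rewrite /t; ring.
  by rewrite hw /t; ring.
- have h1 : 0 <= t - 1 <= 1 by apply/andP; split; rewrite /t; lra.
  split; rewrite ?h1 ?lexx ?ltxx ?andbF ?ler01 //=.
Qed.
End Upd.
Section Run.
Variables (R : archiRealFieldType) (n : nat) (choose : vec R n -> 'I_n * 'I_n).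
Definition PAc (q : vec R n) := pair_aggregate q (choose q).1 (choose q).2.

Lemma expect_one (q : vec R n) f : expect [:: (1, q)] f = f q.
Proof. by rewrite /expect big_cons big_nil mul1r addr0. Qed.

Lemma expect_flat (L : seq (R * vec R n)) k f :
  expect (flatten [seq [seq (w.1 * v.1, v.2) | v <- run choose k w.2] | w <- L]) f =
  \sum_(w <- L) w.1 * expect (run choose k w.2) f.
Proof.
rewrite /expect big_flatten big_map; apply: eq_bigr => w _.
by rewrite big_map big_distrr; apply: eq_bigr => v _ /=; rewrite mulrA.
Qed.

Lemma run_S k q : (2 <= nfrac q)%N -> run choose k.+1 q =
  flatten [seq [seq (w.1 * v.1, v.2) | v <- run choose k w.2] | w <- PAc q].
Proof. by move=> h /=; rewrite h. Qed.

Lemma run_S0 k q : ~~ (2 <= nfrac q)%N -> run choose k.+1 q = [:: (1, q)].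
Proof. by move=> /negbTE h /=; rewrite h. Qed.

Variable Inv : vec R n -> Prop.
Hypothesis pres : forall q, Inv q -> (2 <= nfrac q)%N ->
  forall x, x \in PAc q -> 0 <= x.1 /\ Inv x.2.

Lemma run_le (f : vec R n -> R) :
  (forall q, Inv q -> (2 <= nfrac q)%N -> expect (PAc q) f <= f q) ->
  forall k q, Inv q -> expect (run choose k q) f <= f q.
Proof.
move=> step; elim=> [|k IH] q Iq; first by rewrite expect_one.
case: (boolP (2 <= nfrac q)%N) => h; last by rewrite run_S0 // expect_one.
rewrite run_S // expect_flat; apply: le_trans (step q Iq h).
rewrite /expect big_seq [X in _ <= X]big_seq; apply: ler_sum => x hx.
have [x0 Ix] := pres Iq h hx.
by apply: ler_wpM2l => //; apply: IH.
Qed.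

Lemma run_eq (f : vec R n -> R) :
  (forall q, Inv q -> (2 <= nfrac q)%N -> expect (PAc q) f = f q) ->
  forall k q, Inv q -> expect (run choose k q) f = f q.
Proof.
move=> step; elim=> [|k IH] q Iq; first by rewrite expect_one.
case: (boolP (2 <= nfrac q)%N) => h; last by rewrite run_S0 // expect_one.
rewrite run_S // expect_flat -[RHS](step q Iq h).
rewrite /expect big_seq [RHS]big_seq; apply: eq_bigr => x hx.
have [x0 Ix] := pres Iq h hx.
by congr (_ * _); apply: IH.
Qed.

Lemma run_mem k q x : Inv q -> x \in run choose k q -> Inv x.2.
Proof.
elim: k q x => [|k IH] q x Iq; first by rewrite inE => /eqP ->.
case: (boolP (2 <= nfrac q)%N) => h; last by rewrite run_S0 // inE => /eqP ->.
rewrite run_S // => /flattenP [s /mapP [w hw ->]] /mapP [v hv ->] /=.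
have [_ Iw] := pres Iq h hw.
exact: IH hv.
Qed.
End Run.

Lemma run_nfrac (R : archiRealFieldType) (n : nat) (choose : vec R n -> 'I_n * 'I_n) :
  (forall q, (2 <= nfrac q)%N -> forall x, x \in PAc choose q -> (nfrac x.2 < nfrac q)%N) ->
  forall k q x, x \in run choose k q -> (nfrac x.2 < 2)%N \/ (k + nfrac x.2 <= nfrac q)%N.
Proof.
move=> dec; elim=> [|k IH] q x; first by rewrite inE => /eqP -> /=; right.
case: (boolP (2 <= nfrac q)%N) => h.
  rewrite run_S // => /flattenP [s /mapP [w hw ->]] /mapP [v hv ->] /=.
  case: (IH _ _ hv) => [->|h2]; first by left.
  right; have h3 := dec q h w hw; rewrite addSn; exact: leq_ltn_trans h2 h3.
by rewrite run_S0 // inE => /eqP -> /=; left; rewrite ltnNge.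
Qed.

Lemma card2 (T : finType) (S : {set T}) k k' : k \in S -> k' \in S -> k != k' -> (2 <= #|S|)%N.
Proof.
move=> h1 h2 h; have := cards2 k k'; rewrite h => <-.
by apply: subset_leq_card; apply/subsetP => x; rewrite !inE => /orP[]/eqP->.
Qed.

Lemma notfrac01 (R : archiRealFieldType) (x : R) : 0 <= x <= 1 -> ~~ fracb x -> x = 0 \/ x = 1.
Proof.
case/andP => h0 h1; rewrite /fracb negb_and -!leNgt; case/orP => h; [left|right];
  apply/eqP; rewrite eq_le ?h ?h0 ?h1 //.
Qed.

Lemma expect2 (R : archiRealFieldType) n (w v : R) (x1 x2 : vec R n) f :
  expect [:: (w, x1); (v, x2)] f = w * f x1 + v * f x2.
Proof. by rewrite /expect !big_cons big_nil addr0. Qed.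

Lemma expect_eqm (R : archiRealFieldType) n (D : seq (R * vec R n)) f g :
  (forall x, x \in D -> f x.2 = g x.2) -> expect D f = expect D g.
Proof. by move=> h; rewrite /expect big_seq [RHS]big_seq; apply: eq_bigr => x hx; rewrite h. Qed.

Lemma expect_subc (R : archiRealFieldType) n (D : seq (R * vec R n)) f c :
  expect D (fun q => f q - c) = expect D f - c * expect D (fun _ => 1).
Proof. by rewrite /expect mulr_sumr -sumrB; apply: eq_bigr => x _; ring. Qed.

Lemma pmass01 (R : archiRealFieldType) n (q : vec R n) (B : {set 'I_n}) :
  (forall k, k \in B -> q k = 0 \/ q k = 1) -> pmass q B = #|out_set q :&: B|%:R.
Proof.
move=> h; rewrite /pmass (big_setID (out_set q)) /= [X in _ + X]big1 ?addr0; last first.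
  move=> k; rewrite !inE => /andP[hk kB]; case: (h k kB) => // e.
  by rewrite e eqxx in hk.
rewrite setIC -sum1_card natr_sum; apply: eq_bigr => k; rewrite !inE => /andP[/eqP -> _].
by [].
Qed.

Section Main.
Variables (R : archiRealFieldType) (n : nat) (F : {set {set 'I_n}})
  (p : vec R n) (choose : vec R n -> 'I_n * 'I_n)
  (l : nat) (Rg : 'I_l -> {set 'I_n}).
Hypotheses (HF : tree_family F) (Hp : forall i, 0 <= p i <= 1)
  (HK : exists k : nat, \sum_i p i = k%:R) (Hch : valid_chooser F choose)
  (HRg : forall h, Rg h \in F)
  (Hdis : forall h h', h != h' -> [disjoint Rg h & Rg h']).

Definition fl h : R := (Num.floor (pmass p (Rg h)))%:~R.
Definition nfA (q : vec R n) (A : {set 'I_n}) := #|[set k in A | fracb (q k)]|.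

Definition Inv (q : vec R n) := [/\ forall i, 0 <= q i <= 1,
  pmass q setT = pmass p setT,
  forall h, fl h <= pmass q (Rg h) <= fl h + 1 &
  forall h, (2 <= nfA q (Rg h))%N -> pmass q (Rg h) = pmass p (Rg h)].

Lemma Inv_p : Inv p.
Proof.
split=> // h; rewrite /fl floor_le /= -[1]/(1%:~R : R) -intrD ltW //.
exact: floorD1_gt.
Qed.

Lemma onefrac (q : vec R n) A k h : Inv q -> A = Rg h -> (nfA q A <= 1)%N -> k \in A ->
  fracb (q k) -> pmass q A - q k = fl h.
Proof.
move=> [I1 _ I3 _] eA hA kA fk.
have all01 : forall k', k' \in A :\ k -> q k' = 0 \/ q k' = 1.
  move=> k'; rewrite !inE => /andP[hk' k'A]; apply: notfrac01 => //.
  apply/negP => fk'; have := card2 (S := [set k in A | fracb (q k)]) (k := k') (k' := k).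
  by rewrite !inE k'A fk' kA fk hk' => /(_ isT isT isT); rewrite leqNgt ltnS hA.
rewrite /pmass (big_setD1 k) //= -/(pmass q (A :\ k)) pmass01 // [q k + _]addrC addrK.
have := I3 h; rewrite -eA; rewrite /pmass (big_setD1 k) //= -/(pmass q (A :\ k)) pmass01 //.
move: fk; rewrite /fracb => /andP[f0 f1] /andP[h1 h2].
apply: nat_eq_int; lra.
Qed.

Lemma Inv_upd (q : vec R n) i j a b : Inv q -> valid_pair F q (i, j) ->
  a + b = q i + q j -> 0 <= a <= 1 -> 0 <= b <= 1 -> Inv (upd2 q i j a b).
Proof.
move=> Iq V hab ha hb; have Iq' := Iq; case: Iq' => I1 I2 I3 I4.
case: (V) => /= hij fi fj _.
have Hsub : forall A, (nfA (upd2 q i j a b) A <= nfA q A)%N.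
  by move=> A; apply: subset_leq_card; apply: fracset_sub.
have keep : forall h, (2 <= nfA q (Rg h))%N -> pmass (upd2 q i j a b) (Rg h) = pmass q (Rg h).
  move=> h h2; rewrite pmass_upd2 // -(crossing HF V (HRg h) h2).
  case: (i \in Rg h) => /=; rewrite ?mul1r ?mul0r ?addr0 //; lra.
split.
- by move=> k; rewrite upd2E; case: ifP => _ //; case: ifP.
- by rewrite pmass_upd2 // !inE !mul1r I2 -I2; lra.
- move=> h; case: (boolP (2 <= nfA q (Rg h))%N) => h2; first by rewrite keep.
  rewrite -ltnNge ltnS in h2.
  rewrite pmass_upd2 //.
  case hiA: (i \in Rg h); case hjA: (j \in Rg h) => /=.
  + have := card2 (S := [set k in Rg h | fracb (q k)]) (k := i) (k' := j).
    by rewrite !inE hiA hjA fi fj hij => /(_ isT isT isT); rewrite leqNgt ltnS h2.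
  + have e := onefrac Iq (erefl _) h2 hiA fi.
    have -> : pmass q (Rg h) + 1 * (a - q i) + 0 * (b - q j) = (pmass q (Rg h) - q i) + a
      by ring.
    by rewrite e; apply/andP; split; lra.
  + have e := onefrac Iq (erefl _) h2 hjA fj.
    have -> : pmass q (Rg h) + 0 * (a - q i) + 1 * (b - q j) = (pmass q (Rg h) - q j) + b
      by ring.
    by rewrite e; apply/andP; split; lra.
  + by rewrite !mul0r !addr0.
- move=> h h2; rewrite keep ?I4 //; exact: leq_trans h2 (Hsub _).
Qed.

Lemma step_spec (q : vec R n) : (2 <= nfrac q)%N ->
  exists i j w a1 b1 a2 b2, valid_pair F q (i, j) /\
  PAc choose q = [:: (w, upd2 q i j a1 b1); (1 - w, upd2 q i j a2 b2)] /\
  [/\ 0 <= w <= 1, a1 + b1 = q i + q j, a2 + b2 = q i + q j,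
      w * a1 + (1 - w) * a2 = q i &
      [/\ (0 <= a1 <= 1) && (0 <= b1 <= 1), (0 <= a2 <= 1) && (0 <= b2 <= 1),
          ~~ (fracb a1 && fracb b1) & ~~ (fracb a2 && fracb b2)]].
Proof.
move=> h; have := Hch h; rewrite /PAc; case: (choose q) => i j V.
have [_ fi fj _] := V.
have [w [a1 [b1 [a2 [b2 [E S]]]]]] := PA_spec fi fj.
by exists i, j, w, a1, b1, a2, b2.
Qed.

Lemma pres (q : vec R n) : Inv q -> (2 <= nfrac q)%N ->
  forall x, x \in PAc choose q -> 0 <= x.1 /\ Inv x.2.
Proof.
move=> Iq h x.
have [i [j [w [a1 [b1 [a2 [b2 [V [-> [/andP[w0 w1] e1 e2 _ [/andP[ha1 hb1] /andP[ha2 hb2] _ _]]]]]]]]]]] :=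
  step_spec h.
rewrite !inE => /orP[]/eqP -> /=; split.
- exact: w0.
- exact: Inv_upd.
- by rewrite subr_ge0.
- exact: Inv_upd.
Qed.

Lemma mart_pmass A (q : vec R n) : Inv q -> (2 <= nfrac q)%N ->
  expect (PAc choose q) (fun x => pmass x A) = pmass q A.
Proof.
move=> Iq h.
have [i [j [w [a1 [b1 [a2 [b2 [V [-> [_ e1 e2 Hm _]]]]]]]]]] := step_spec h.
have [hij _ _ _] := V.
rewrite expect2 !pmass_upd2 //.
have -> : b1 = q i + q j - a1 by rewrite -e1; ring.
have -> : b2 = q i + q j - a2 by rewrite -e2; ring.
set ei := (i \in A)%:R; set ej := (j \in A)%:R; set M := pmass q A.
have -> : w * (M + ei * (a1 - q i) + ej * (q i + q j - a1 - q j)) +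
  (1 - w) * (M + ei * (a2 - q i) + ej * (q i + q j - a2 - q j)) =
  M + (ei - ej) * (w * a1 + (1 - w) * a2 - q i) by ring.
by rewrite Hm subrr mulr0 addr0.
Qed.

Lemma mart_one (q : vec R n) : Inv q -> (2 <= nfrac q)%N ->
  expect (PAc choose q) (fun _ => 1) = 1.
Proof.
move=> Iq h.
have [i [j [w [a1 [b1 [a2 [b2 [V [-> _]]]]]]]]] := step_spec h.
by rewrite expect2; ring.
Qed.

Lemma uniq_in k h h' : k \in Rg h -> k \in Rg h' -> h = h'.
Proof.
move=> h1 h2; apply/eqP; apply: contraT => hne.
by rewrite (disjointFr (Hdis hne) h1) in h2.
Qed.

Definition sgn (i j : 'I_n) h : R := (i \in Rg h)%:R - (j \in Rg h)%:R.

Lemma sgn3 i j h : [|| sgn i j h == 0, sgn i j h == 1 | sgn i j h == -1].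
Proof.
rewrite /sgn; case: (i \in Rg h); case: (j \in Rg h) => /=;
  rewrite ?mulr1n ?mulr0n ?subrr ?subr0 ?sub0r ?eqxx ?orbT //.
Qed.

Lemma sgn1 i j h : sgn i j h = 1 -> i \in Rg h.
Proof.
rewrite /sgn; case: (i \in Rg h); case: (j \in Rg h) => //=;
  rewrite ?mulr1n ?mulr0n ?subrr ?subr0 ?sub0r => e //; exfalso; lra.
Qed.

Lemma sgnm1 i j h : sgn i j h = -1 -> j \in Rg h.
Proof.
rewrite /sgn; case: (i \in Rg h); case: (j \in Rg h) => //=;
  rewrite ?mulr1n ?mulr0n ?subrr ?subr0 ?sub0r => e //; exfalso; lra.
Qed.

Lemma upd_fac (q : vec R n) i j a b h : i != j -> a + b = q i + q j ->
  pmass (upd2 q i j a b) (Rg h) - fl h =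
  (pmass q (Rg h) - fl h) + sgn i j h * (a - q i).
Proof.
move=> hij e; rewrite pmass_upd2 // /sgn.
have -> : b = q i + q j - a by rewrite -e; ring.
ring.
Qed.

Definition G (J : {set 'I_l}) (q : vec R n) := \prod_(h in J) (pmass q (Rg h) - fl h).
Definition H (J : {set 'I_l}) (q : vec R n) := \prod_(h in J) (1 - (pmass q (Rg h) - fl h)).

Lemma super_G J (q : vec R n) : Inv q -> (2 <= nfrac q)%N ->
  expect (PAc choose q) (G J) <= G J q.
Proof.
move=> Iq h; have [_ _ I3 _] := Iq.
have [i [j [w [a1 [b1 [a2 [b2 [V [-> [w01 e1 e2 Hm _]]]]]]]]]] := step_spec h.
have [hij _ _ _] := V.
rewrite expect2 /G.
rewrite (eq_bigr (fun h => (pmass q (Rg h) - fl h) + sgn i j h * (a1 - q i)));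
  last by move=> k _; apply: upd_fac.
rewrite [X in _ + _ * X](eq_bigr (fun h => (pmass q (Rg h) - fl h) + sgn i j h * (a2 - q i)));
  last by move=> k _; apply: upd_fac.
apply: key => //.
- by rewrite -Hm; ring.
- by move=> k _; have /andP[h1 _] := I3 k; rewrite subr_ge0.
- by move=> k _; apply: sgn3.
- by move=> k k' _ _ /sgn1 h1 /sgn1 h2; apply: uniq_in h1 h2.
- by move=> k k' _ _ /sgnm1 h1 /sgnm1 h2; apply: uniq_in h1 h2.
Qed.

Lemma super_H J (q : vec R n) : Inv q -> (2 <= nfrac q)%N ->
  expect (PAc choose q) (H J) <= H J q.
Proof.
move=> Iq h; have [_ _ I3 _] := Iq.
have [i [j [w [a1 [b1 [a2 [b2 [V [-> [w01 e1 e2 Hm _]]]]]]]]]] := step_spec h.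
have [hij _ _ _] := V.
rewrite expect2 /H.
rewrite (eq_bigr (fun h => (1 - (pmass q (Rg h) - fl h)) + (- sgn i j h) * (a1 - q i)));
  last by move=> k _; rewrite upd_fac //; ring.
rewrite [X in _ + _ * X](eq_bigr (fun h => (1 - (pmass q (Rg h) - fl h)) + (- sgn i j h) * (a2 - q i)));
  last by move=> k _; rewrite upd_fac //; ring.
apply: key => //.
- by rewrite -Hm; ring.
- by move=> k _; have /andP[_ h1] := I3 k; rewrite subr_ge0; lra.
- move=> k _; case/or3P: (sgn3 i j k) => /eqP ->;
    rewrite ?oppr0 ?opprK ?eqxx ?orbT //.
- move=> k k' _ _ e1' e2'.
  by apply: (uniq_in (k := j)); apply: sgnm1; lra.
- move=> k k' _ _ e1' e2'.
  by apply: (uniq_in (k := i)); apply: sgn1; lra.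
Qed.

Lemma final01 (x : vec R n) : Inv x -> (nfrac x < 2)%N -> forall k, x k = 0 \/ x k = 1.
Proof.
move=> [I1 I2 _ _] hn k; case: (boolP (fracb (x k))) => fk; last exact: notfrac01.
exfalso.
have others : forall k', k' \in setT :\ k -> x k' = 0 \/ x k' = 1.
  move=> k'; rewrite !inE andbT => hk'; apply: notfrac01 => //; apply/negP => fk'.
  have := card2 (S := [set i | fracb (x i)]) (k := k') (k' := k).
  by rewrite !inE fk' fk hk' => /(_ isT isT isT); rewrite leqNgt hn.
have [K HKe] := HK.
have : pmass p setT = K%:R by rewrite -HKe /pmass; apply: eq_bigl => i; rewrite inE.
rewrite -I2 /pmass (big_setD1 k) ?inE //= -/(pmass x _) pmass01 // addrC => e.
move: fk; rewrite /fracb => /andP[f0 f1].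
exact: sum_noint e f0 f1.
Qed.

Lemma dec (q : vec R n) : (2 <= nfrac q)%N ->
  forall x, x \in PAc choose q -> (nfrac x.2 < nfrac q)%N.
Proof.
move=> h x.
have [i [j [w [a1 [b1 [a2 [b2 [V [-> [_ _ _ _ [_ _ f1 f2]]]]]]]]]]] := step_spec h.
have [hij fi fj _] := V.
by rewrite !inE => /orP[]/eqP -> /=; apply: nfrac_dec.
Qed.

Lemma L_mem x : x \in run choose n p -> Inv x.2 /\ (forall k, x.2 k = 0 \/ x.2 k = 1).
Proof.
move=> hx; have Ix := run_mem pres Inv_p hx.
split=> //; apply: final01 => //.
case: (run_nfrac dec hx) => // h.
have : (nfrac p <= n)%N by rewrite /nfrac -[X in (_ <= X)%N]card_ord max_card.
move: h; case: (nfrac x.2) => [|[|m]] //= h1 h2.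
by move: (leq_trans h1 h2); rewrite addnS ltnNge leq_addr.
Qed.

Lemma L_Y (q : vec R n) : Inv q -> (forall k, q k = 0 \/ q k = 1) -> forall h,
  #|out_set q :&: Rg h|%:R - fl h = pmass q (Rg h) - fl h /\
  (#|out_set q :&: Rg h|%:R - fl h = 0 \/ #|out_set q :&: Rg h|%:R - fl h = 1).
Proof.
move=> [_ _ I3 _] h01 h; rewrite -pmass01 //; split => //.
have := I3 h; rewrite pmass01 // => /andP[h1 h2]; exact: nat_01.
Qed.

Lemma L_mu : 0 <= \sum_(h < l) (pmass p (Rg h) - fl h) <= l%:R.
Proof.
apply/andP; split.
  by apply: sumr_ge0 => h _; rewrite subr_ge0 /fl floor_le.
rewrite -[l in l%:R]card_ord -sumr_const; apply: ler_sum => h _.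
have := floorD1_gt (pmass p (Rg h)); rewrite intrD /fl /=; lra.
Qed.

Lemma L_Q (q : vec R n) : Inv q -> (forall k, q k = 0 \/ q k = 1) ->
  #|out_set q :&: \bigcup_(h < l) Rg h|%:R - pmass p (\bigcup_(h < l) Rg h) =
  \sum_(h < l) (#|out_set q :&: Rg h|%:R - fl h) - \sum_(h < l) (pmass p (Rg h) - fl h).
Proof.
move=> Iq h01; rewrite -pmass01 // /pmass !partition_disjoint_bigcup //.
rewrite [X in _ = X - _](eq_bigr (fun h => pmass q (Rg h) - fl h)); last by move=> h _; case: (L_Y Iq h01 h).
rewrite !sumrB /pmass; ring.
Qed.

Lemma L_EY h : expect (run choose n p) (fun q => #|out_set q :&: Rg h|%:R - fl h) =
  pmass p (Rg h) - fl h.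
Proof.
rewrite (expect_eqm (g := fun q => pmass q (Rg h) - fl h)); last first.
  by move=> x hx; have [Ix h01] := L_mem hx; case: (L_Y Ix h01 h).
rewrite expect_subc (run_eq pres (mart_pmass (Rg h)) _ Inv_p).
by rewrite (run_eq pres mart_one _ Inv_p) mulr1.
Qed.

Lemma L_J (J : {set 'I_l}) :
  expect (run choose n p) (fun q => \prod_(h in J) (#|out_set q :&: Rg h|%:R - fl h))
   <= \prod_(h in J) expect (run choose n p) (fun q => #|out_set q :&: Rg h|%:R - fl h)
  /\ expect (run choose n p) (fun q => \prod_(h in J) (1 - (#|out_set q :&: Rg h|%:R - fl h)))
   <= \prod_(h in J) (1 - expect (run choose n p) (fun q => #|out_set q :&: Rg h|%:R - fl h)).
Proof.
split.
  rewrite (expect_eqm (g := G J)); last first.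
    move=> x hx; have [Ix h01] := L_mem hx; apply: eq_bigr => h _.
    by case: (L_Y Ix h01 h).
  rewrite (eq_bigr (fun h => pmass p (Rg h) - fl h)); last by move=> h _; rewrite L_EY.
  exact: (run_le pres (super_G J) _ Inv_p).
rewrite (expect_eqm (g := H J)); last first.
  move=> x hx; have [Ix h01] := L_mem hx; apply: eq_bigr => h _.
  by case: (L_Y Ix h01 h) => ->.
rewrite (eq_bigr (fun h => 1 - (pmass p (Rg h) - fl h))); last by move=> h _; rewrite L_EY.
exact: (run_le pres (super_H J) _ Inv_p).
Qed.
End Main.
Theorem lemma4 (R : archiRealFieldType) (n : nat) (F : {set {set 'I_n}})
  (p : vec R n) (choose : vec R n -> 'I_n * 'I_n)
  (l : nat) (Rg : 'I_l -> {set 'I_n}) :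
  tree_family F ->
  (forall i, 0 <= p i <= 1) ->
  (exists k : nat, \sum_i p i = k%:R) ->
  valid_chooser F choose ->
  (forall h, Rg h \in F) ->
  (forall h h', h != h' -> [disjoint Rg h & Rg h']) ->
  let D := hsumm choose p in
  let Q := \bigcup_(h < l) Rg h in
  let fl h := (Num.floor (pmass p (Rg h)))%:~R : R in
  let Y h q := (#|out_set q :&: Rg h|%:R - fl h) : R in
  let mu := \sum_(h < l) (pmass p (Rg h) - fl h) in
  [/\ mu <= l%:R,
      (forall w q, (w, q) \in D -> 0 < w ->
         [/\ `|#|out_set q :&: Q|%:R - pmass p Q| <= l%:R,
             #|out_set q :&: Q|%:R - pmass p Q = \sum_(h < l) Y h q - mu &
             forall h, Y h q = 0 \/ Y h q = 1]),
      (forall h, expect D (Y h) = pmass p (Rg h) - fl h) &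
      (forall J : {set 'I_l},
         expect D (fun q => \prod_(h in J) Y h q)
           <= \prod_(h in J) expect D (Y h)
       /\ expect D (fun q => \prod_(h in J) (1 - Y h q))
           <= \prod_(h in J) (1 - expect D (Y h)))].
Proof.
move=> HF Hp HK Hch HRg Hdis D Q fl0 Y mu.
have Lmu := L_mu p Rg.
split.
- by case/andP: Lmu.
- move=> w q hq _.
  have [Iq h01] := L_mem HF Hp HK Hch HRg hq; rewrite /= in Iq h01.
  have eQ := L_Q Hdis Iq h01.
  have hY := L_Y Iq h01.
  have hYs : 0 <= \sum_(h < l) Y h q <= l%:R.
    apply/andP; split.
      by apply: sumr_ge0 => h _; rewrite /Y; case: (hY h) => _ [->|->]; rewrite ?lexx ?ler01.
    rewrite -[l in l%:R]card_ord -sumr_const; apply: ler_sum => h _.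
    by rewrite /Y; case: (hY h) => _ [->|->]; rewrite ?lexx ?ler01.
  split.
  + rewrite /Q eQ -/mu ler_norml.
    move: hYs Lmu; rewrite -/mu => /andP[a1 a2] /andP[b1 b2].
    apply/andP; split; lra.
  + exact: eQ.
  + by move=> h; case: (hY h) => _.
- move=> h; exact: (L_EY HF Hp HK Hch HRg).
- move=> J; exact: (L_J HF Hp HK Hch HRg Hdis).
Qed.
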